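(* Let $\mathcal{M}$ be a separable metric space, $f:\mathcal{M}\to\mathcal{M}$ continuous, and $\mathcal{X}\subseteq\mathcal{M}$ forward invariant under $f$ and path connected. Consider $x_{k+1}=f(x_k)$ on $\mathcal{X}$, with $\mathcal{W}$ its set of $\omega$-limit sets. Suppose: (T1') there exist a separable metric space $\mathcal{Z}$, a continuous map $g:\mathcal{Z}\to\mathcal{Z}$ such that $z_{k+1}=g(z_k)$ on $\mathcal{Z}$ has closed basins, and a continuous map $F:\mathcal{X}\to\mathcal{Z}$ with $F\circ f=g\circ F$ on $\mathcal{X}$; (T2') every trajectory of $x_{k+1}=f(x_k)$ on $\mathcal{X}$ is forward precompact in $\mathcal{X}$; (T3') $\mathcal{W}$ is countable. Then the set $\{F(\Omega)\mid\Omega\in\mathcal{W}\}$ has exactly one element.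
   Context: The forward orbit of $\xi$ is $\{f^k(\xi)\mid k\in\mathbb{N}\}$; the trajectory through $\xi$ is forward precompact in $\mathcal{X}$ if the closure in $\mathcal{X}$ of its forward orbit is compact. $\omega_{\mathcal{X}}(\xi)$ is the set of $x\in\mathcal{X}$ such that $f^{k_j}(\xi)\to x$ for some indices $k_j\to\infty$; $\mathcal{W}=\{\omega_{\mathcal{X}}(\xi)\mid\xi\in\mathcal{X}\}$. For the system $z_{k+1}=g(z_k)$ on $\mathcal{Z}$, $\omega_{\mathcal{Z}}$ and its set of $\omega$-limit sets are defined analogously, and the domain of attraction of an $\omega$-limit set $\Omega$ is $D^+_{\mathcal{Z}}(\Omega)=\{\zeta\in\mathcal{Z}\mid\omega_{\mathcal{Z}}(\zeta)=\Omega\}$; the system has closed basins if $D^+_{\mathcal{Z}}(\Omega)$ is closed for every $\omega$-limit set $\Omega$ of that system. *)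

(* Defs.v *)
From HB Require Import structures.
From mathcomp Require Import all_boot all_order all_algebra.
From mathcomp Require Import all_classical all_reals all_analysis.
Set Implicit Arguments. Unset Strict Implicit. Unset Printing Implicit Defensive.
Import Order.TTheory GRing.Theory Num.Theory.
Local Open Scope classical_set_scope.
Local Open Scope ring_scope.

Definition separable (T : topologicalType) : Prop :=
  exists S : set T, countable S /\ dense S.

Definition path_connected_set (R : realType) (T : topologicalType) (A : set T) : Prop :=
  A !=set0 /\
  forall x y, A x -> A y ->
    exists gam : R -> T,
      {within `[0, 1], continuous gam} /\ gam 0 = x /\ gam 1 = y /\
      gam @` `[0, 1] `<=` A.

Definition forward_orbit (T : Type) (f : T -> T) (xi : T) : set T :=
  [set iter k f xi | k in [set: nat]].

Definition forward_precompact_in (T : topologicalType) (A : set T)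
    (f : T -> T) (xi : T) : Prop :=
  compact (A `&` closure (forward_orbit f xi)).

Definition omega_limit (T : topologicalType) (A : set T) (f : T -> T) (xi : T) : set T :=
  [set x | A x /\ exists k : nat -> nat,
      (forall N : nat, \forall j \near \oo, (N <= k j)%N) /\
      (fun j => iter (k j) f xi) @ \oo --> x].

Definition omega_limit_sets (T : topologicalType) (A : set T) (f : T -> T) : set (set T) :=
  [set omega_limit A f xi | xi in A].

Definition domain_of_attraction (T : topologicalType) (g : T -> T) (Om : set T) : set T :=
  [set z | omega_limit setT g z = Om].

Definition closed_basins (T : topologicalType) (g : T -> T) : Prop :=
  forall Om, omega_limit_sets setT g Om -> closed (domain_of_attraction g Om).

(* Main.v *)
Require Import Defs.
From HB Require Import structures.
From mathcomp Require Import all_boot all_order all_algebra.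
From mathcomp Require Import all_classical all_reals all_analysis.
Import Order.TTheory GRing.Theory Num.Theory.
Local Open Scope classical_set_scope.
Local Open Scope ring_scope.
From mathcomp Require Import lra.
Lemma within_ball (R : realType) (M Z : pseudoMetricType R) (A : set M) (F : M -> Z) x :
  {within A, continuous F} -> A x -> forall eps : R, 0 < eps ->
  exists2 d : R, 0 < d & forall y, A y -> ball x d y -> ball (F x) eps (F y).
Proof.
move=> /subspace_continuousP /(_ x) cF Ax eps eps0.
have /nbhs_ballP [d d0 H] : nbhs x [set y | A y -> ball (F x) eps (F y)].
  exact: (cvg_ball (cF Ax) eps0).
exists d => // y Ay bxy.
exact: (H y bxy Ay).
Qed.

Definition within_ball_impl := within_ball.
Arguments within_ball_impl {R M Z A F x}.

Lemma near_oo_nat (P : nat -> Prop) : (\forall n \near \oo, P n) ->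
  exists N, forall n, (N <= n)%N -> P n.
Proof. by move=> [N _ H]; exists N => n Nn; apply: H. Qed.

Lemma within_seq (R : realType) (M Z : pseudoMetricType R) (A : set M) (F : M -> Z) x
  (w : nat -> M) :
  {within A, continuous F} -> A x -> (forall j, A (w j)) -> w @ \oo --> x ->
  (fun j => F (w j)) @ \oo --> F x.
Proof.
move=> cF Ax Aw wx; apply/cvg_ballP => eps eps0.
have [d d0 H] := @within_ball R M Z A F x cF Ax eps eps0.
have [N _ HN] := cvg_ball wx d0.
by exists N => // j Nj; apply: H => //; apply: HN.
Qed.

Lemma omega_image (R : realType) (M Z : metricType R) (f : M -> M) (X : set M)
  (g : Z -> Z) (F : M -> Z) xi :
  f @` X `<=` X -> {within X, continuous F} ->
  (forall x, X x -> F (f x) = g (F x)) -> forward_precompact_in X f xi -> X xi ->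
  F @` omega_limit X f xi = omega_limit setT g (F xi).
Proof.
move=> fX cF Fc Pc Xxi.
have iX : forall k, X (iter k f xi).
  elim => [//|k IH /=]; apply: fX; by exists (iter k f xi).
have cj : forall k, F (iter k f xi) = iter k g (F xi).
  by elim => [//|k IH /=]; rewrite Fc // IH.
apply/seteqP; split.
  move=> _ [x [Xx [k [kinf kc]]] <-]; split => //; exists k; split => //.
  have -> : (fun j => iter (k j) g (F xi)) = (fun j => F (iter (k j) f xi)).
    by apply/funext => j; rewrite cj.
  exact: (@within_seq R M Z X F x (fun j => iter (k j) f xi) cF Xx (fun j => iX _) kc).
move=> z [_ [k [kinf kc]]].
pose w j := iter (k j) f xi.
have [x [[Xx _] clx]] : (X `&` closure (forward_orbit f xi)) `&` cluster (w @ \oo) !=set0.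
  apply: (Pc (w @ \oo) _); exists 0%N => // j _; split; first exact: iX.
  by apply: subset_closure; exists (k j).
have ch : forall J : nat, exists mJ, (J <= mJ)%N /\ ball x (J.+1%:R^-1) (w mJ).
  move=> J; have [] := clx [set y | exists2 m, (J <= m)%N & w m = y] (ball x J.+1%:R^-1).
  - by apply: (filterS _ (nbhs_infty_ge J)) => j Jj; exists j.
  - by apply: nbhsx_ballx; rewrite invr_gt0 ltr0n.
  by move=> _ [[m Jm <-] b]; exists m.
have /choice [m mP] := ch.
have conv : (fun J => w (m J)) @ \oo --> x.
  apply/cvg_ballP => eps eps0.
  have [N1 HN1] := @near_oo_nat _ (near_infty_natSinv_lt (PosNum eps0)).
  exists N1 => // J N1J; case: (mP J) => _ b.
  by apply: (le_ball (ltW (HN1 _ N1J))).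
have c1 : (fun J => F (w (m J))) @ \oo --> F x.
  exact: (@within_seq R M Z X F x (fun J => w (m J)) cF Xx (fun J => iX _) conv).
have c2 : (fun J => F (w (m J))) @ \oo --> z.
  apply/cvg_ballP => eps eps0.
  have [N2 _ HN2] := cvg_ball kc eps0.
  exists N2 => // J N2J; rewrite /w cj; apply: HN2.
  by apply: leq_trans N2J _; case: (mP J).
have Fxz : F x = z.
  by apply: (cvg_unique (@metric_hausdorff R Z) c1 c2).
exists x; last exact: Fxz.
split => //; exists (fun J => k (m J)); split => //.
move=> N; have [N0 HN0] := @near_oo_nat _ (kinf N).
exists N0 => // J N0J; apply: HN0; apply: leq_trans N0J _; by case: (mP J).
Qed.
Section Sier.
Context {R : realType} {Y : Type}.

Definition CLp (q : R -> Y) (lo hi : R) := forall y c, lo <= c <= hi ->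
  (forall eps : R, 0 < eps -> exists t, [/\ lo <= t <= hi, `|t - c| < eps & q t = y]) ->
  q c = y.
Definition INJp (q : R -> Y) (e : Y -> nat) (lo hi : R) := forall s t,
  lo <= s <= hi -> lo <= t <= hi -> e (q s) = e (q t) -> q s = q t.

Lemma step_left q e lo hi a b n : lo <= a -> a <= b -> b <= hi ->
  CLp q lo hi -> INJp q e lo hi -> e (q a) <> n -> q a <> q b ->
  exists a' b', [/\ a <= a', a' <= b', b' <= b, q a' <> q b' &
     forall t, a' <= t <= b' -> e (q t) <> n].
Proof.
move=> loa ab bhi CL INJ ean qab.
pose A := [set t | a <= t <= b /\ e (q t) = n].
have [[t0 At0]|nA] := pselect (exists t, A t); last first.
  exists a, b; split => // t tab etn; apply: nA; exists t; split => //.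
have lbA : has_lbound A by exists a => t [/andP[]].
have hiA : has_inf A by split => //; exists t0.
set c := inf A.
have ct0 : c <= t0 by apply: ge_inf.
have ac : a <= c by apply: lb_le_inf; [exists t0 | move=> t [/andP[]]].
have [/andP[at0 t0b] et0] := At0.
have qc : q c = q t0.
  apply: (CL); first by apply/andP; split; lra.
  move=> eps eps0; have [t At tc] := inf_adherent eps0 hiA.
  have ct : c <= t by apply: ge_inf.
  have [/andP[a_t tb] etn] := At.
  exists t; split; first by apply/andP; split; lra.
    by rewrite ger0_norm; lra.
  apply: (INJ); [apply/andP; split; lra|apply/andP; split; lra|by rewrite etn et0].
have ltac : a < c.
  rewrite lt_neqAle ac andbT; apply/eqP => eac; apply: ean.
  by rewrite eac qc.
have [[t [/andP[a_t tc] qt]]|nex] :=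
    pselect (exists t, a <= t < c /\ q t <> q a); last first.
  exfalso; apply: ean; rewrite -et0 -qc; congr (e _); apply/esym.
  apply: (CL); first by apply/andP; split; lra.
  move=> eps eps0.
  have [le|lt] := leP (c - eps / 2) a.
    exists a; split; first by apply/andP; split; lra.
      by rewrite ler0_norm; lra.
    by [].
  exists (c - eps / 2); split; first by apply/andP; split; lra.
    by rewrite ler0_norm; lra.
  apply: contrapT => neq; apply: nex; exists (c - eps / 2); split => //.
  by apply/andP; split; lra.
exists a, t; split => //; first lra.
  by move=> h; apply: qt; rewrite h.
move=> u /andP[au ut] eun.
have : c <= u by apply: ge_inf => //; split => //; apply/andP; split; lra.
lra.
Qed.


Lemma CLp_neg q lo hi : CLp q lo hi -> CLp (fun t => q (- t)) (- hi) (- lo).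
Proof.
move=> CL y c /andP[h1 h2] H; apply: (CL); first by apply/andP; split; lra.
move=> eps eps0; have [t [/andP[t1 t2] tc qt]] := H eps eps0.
exists (- t); split => //; first by apply/andP; split; lra.
by rewrite -opprD normrN.
Qed.

Lemma INJp_neg q e lo hi : INJp q e lo hi -> INJp (fun t => q (- t)) e (- hi) (- lo).
Proof.
move=> I s t /andP[s1 s2] /andP[t1 t2]; apply: I; apply/andP; split; lra.
Qed.

Lemma step q e lo hi a b n : lo <= a -> a <= b -> b <= hi ->
  CLp q lo hi -> INJp q e lo hi -> q a <> q b ->
  exists a' b', [/\ a <= a', a' <= b', b' <= b, q a' <> q b' &
     forall t, a' <= t <= b' -> e (q t) <> n].
Proof.
move=> loa ab bhi CL INJ qab.
have [ean|ean] := pselect (e (q a) = n); last exact: (@step_left q e lo hi a b n loa ab bhi CL INJ ean qab).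
have ebn : e (q b) <> n.
  move=> ebn; apply: qab; apply: INJ; [apply/andP; split; lra|apply/andP; split; lra|].
  by rewrite ean ebn.
have := @step_left (fun t => q (- t)) e (- hi) (- lo) (- b) (- a) n.
rewrite !opprK => /(_ _ _ _ (@CLp_neg q lo hi CL) (@INJp_neg q e lo hi INJ) ebn).
case; [lra|lra|lra| by move=> h; apply: qab|].
move=> a' [b' [h1 h2 h3 h4 h5]].
exists (- b'), (- a'); split; [lra|lra|lra| by move=> h; apply: h4; rewrite h|].
move=> t /andP[t1 t2]; have := h5 (- t); rewrite opprK; apply; apply/andP; split; lra.
Qed.


Fixpoint useq (h : nat * (R * R) -> R * R) (p0 : R * R) (k : nat) : R * R :=
  match k with 0%N => p0 | k'.+1 => h (k', useq h p0 k') end.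

Lemma sier_lt q e : CLp q 0 1 -> INJp q e 0 1 -> forall s t,
  0 <= s -> s <= t -> t <= 1 -> q s = q t.
Proof.
move=> CL INJ s t s0 st t1; apply: contrapT => qst.
pose Pre (p : R * R) := [/\ 0 <= p.1, p.1 <= p.2, p.2 <= 1 & q p.1 <> q p.2].
pose Post (n : nat) (p p' : R * R) := [/\ p.1 <= p'.1, p'.1 <= p'.2, p'.2 <= p.2,
   q p'.1 <> q p'.2 & forall t, p'.1 <= t <= p'.2 -> e (q t) <> n].
have : forall np : nat * (R * R), exists p', Pre np.2 -> Post np.1 np.2 p'.
  move=> [n [a b]]; have [[/= h1 h2 h3 h4]|nP] := pselect (Pre (a, b)); last first.
    by exists (a, b).
  have [a' [b' [H1 H2 H3 H4 H5]]] := @step q e 0 1 a b n h1 h2 h3 CL INJ h4.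
  by exists (a', b').
move=> /choice [hh hP].
pose u := useq hh (s, t).
have inv : forall k, Pre (u k) /\ Post k (u k) (u k.+1).
  elim => [|k [Pk _]].
    have P0 : Pre (u 0%N) by rewrite /Pre /u /=; split.
    by split => //; apply: (hP (0%N, u 0%N)).
  have Pk1 : Pre (u k.+1).
    have [h1 h2 h3 h4 _] := hP (k, u k) Pk.
    case: Pk => [p1 p2 p3 p4]; rewrite /u /=; split => //; rewrite -/(u k) -/u; lra.
  by split => //; apply: (hP (k.+1, u k.+1)).
have monoa : forall i d, (u i).1 <= (u (i + d)%N).1.
  move=> i; elim => [|d IH]; first by rewrite addn0.
  rewrite addnS; have [_ [h1 h2 _ _ _]] := inv (i + d)%N; lra.
have monob : forall i d, (u (i + d)%N).2 <= (u i).2.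
  move=> i; elim => [|d IH]; first by rewrite addn0.
  rewrite addnS; have [_ [_ h2 h3 _ _]] := inv (i + d)%N; lra.
have ab : forall i j, (u i).1 <= (u j).2.
  move=> i j; have := monoa i j; have := monob j i; rewrite [(j + i)%N]addnC.
  have [[_ h _ _] _] := inv (i + j)%N; lra.
pose S := range (fun k => (u k).1).
have S0 : S !=set0 by exists (u 0%N).1, 0%N.
have hs : has_sup S by split => //; exists (u 0%N).2 => _ [k _ <-].
set c := sup S.
have ac : forall k, (u k).1 <= c.
  by move=> k; apply: sup_upper_bound => //; exists k.
have cb : forall k, c <= (u k).2.
  by move=> k; apply: ge_sup => // _ [j _ <-].
have [_ [_ _ _ _ H]] := inv (e (q c)).
by apply: (H c) => //; apply/andP; split.
Qed.

Lemma sier q e : CLp q 0 1 -> INJp q e 0 1 -> forall s t,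
  0 <= s <= 1 -> 0 <= t <= 1 -> q s = q t.
Proof.
move=> CL INJ s t /andP[s0 s1] /andP[t0 t1].
have [st|ts] := leP s t; first exact: (@sier_lt q e CL INJ).
apply/esym; apply: (@sier_lt q e CL INJ) => //; lra.
Qed.

End Sier.

Theorem theorem20 (R : realType) (M : metricType R) (f : M -> M) (X : set M)
  (Z : metricType R) (g : Z -> Z) (F : M -> Z) :
  separable M -> continuous f ->
  f @` X `<=` X -> path_connected_set R X ->
  (* (T1') *)
  separable Z -> continuous g -> closed_basins g ->
  {within X, continuous F} -> (forall x, X x -> F (f x) = g (F x)) ->
  (* (T2') *)
  (forall xi, X xi -> forward_precompact_in X f xi) ->
  (* (T3') *)
  countable (omega_limit_sets X f) ->
  exists S : set Z, [set F @` Om | Om in omega_limit_sets X f] = [set S].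
Proof.
move=> _ _ fX [[xi0 Xxi0] PC] _ _ CB cF Fc Pc cW.
have key : forall x1 x2, X x1 -> X x2 ->
    omega_limit setT g (F x1) = omega_limit setT g (F x2).
  move=> x1 x2 X1 X2; have [gam [cg [g0 [g1 gX]]]] := PC x1 x2 X1 X2.
  pose q t := omega_limit setT g (F (gam t)).
  have Xg : forall t, 0 <= t <= 1 -> X (gam t).
    by move=> t t01; apply: gX; exists t => //; rewrite /= in_itv /=.
  pose V := [set y | exists2 t, 0 <= t <= 1 & q t = y].
  have cV : countable V.
    apply: (sub_countable (subset_card_le _)
      (sub_countable (card_image_le (fun Om => F @` Om) _) cW)).
    move=> _ [t t01 <-]; exists (omega_limit X f (gam t)); first by exists (gam t) => //; exact: Xg.
    by rewrite (@omega_image R M Z f X g F (gam t) fX cF Fc (Pc _ (Xg t t01)) (Xg t t01)).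
  have /countable_injP [e eI] := cV.
  have INJ : INJp q e 0 1.
    move=> s t s01 t01 est; apply: eI => //; rewrite inE; [exists s|exists t] => //.
  have CL : CLp q 0 1.
    move=> y c c01 H; have [t0 [t01 _ qt0]] := H 1 ltr01.
    have Wy : omega_limit_sets setT g y by exists (F (gam t0)).
    suff: domain_of_attraction g y (F (gam c)) by [].
    apply: (CB y Wy) => B /nbhs_ballP [eps eps0 Bsub].
    have [d1 d10 H1] := @within_ball R M Z X F (gam c) cF (Xg c c01) eps eps0.
    have c01' : `[0, 1]%classic c by rewrite /= in_itv /=.
    have [d2 d20 H2] := within_ball_impl cg c01' d1 d10.
    have [t [t01' tc qt]] := H d2 d20.
    exists (F (gam t)); split; first exact: qt.
    apply: Bsub; apply: H1; first exact: Xg.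
    apply: H2; first by rewrite /= in_itv /= t01'.
    by rewrite /ball /= distrC.
  have := @sier R _ q e CL INJ 0 1; rewrite /q g0 g1; apply; apply/andP; split => //; lra.
exists (F @` omega_limit X f xi0); apply/seteqP; split.
  move=> _ [_ [xi Xxi <-] <-]; rewrite /= (@omega_image R M Z f X g F xi fX cF Fc (Pc _ Xxi) Xxi).
  rewrite (@omega_image R M Z f X g F xi0 fX cF Fc (Pc _ Xxi0) Xxi0).
  exact: key.
move=> _ ->; exists (omega_limit X f xi0) => //; by exists xi0.
Qed.
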